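(* There exists $\beta>\frac23$ such that, with $I=(\frac23,\beta)$, the function $\widetilde{M_f}$ defined in the context satisfies $\widetilde{M_f}(r)>0$ for all $r\in I$.
   Context: For $r>\frac23$ let $u_b(r)\in(\frac65,\frac43)$ be the unique $u\in(\frac65,\frac43)$ with $2-u+2q(1-u)=0$ at $q=1+\sqrt{\frac{r+u-2}{r+0.1}}$. Set $q_{f,\pm}(r)=1\pm\sqrt{\frac{r}{r+0.1}}$, $q_{b,\pm}(r)=1\pm\sqrt{\frac{r+u_b(r)-2}{r+0.1}}$, $S(r)=(q_{f,+}-2q_{f,-})+(q_{b,+}-2q_{b,-})$ and $D_0(r)=\frac{2(2-u_b(r))^2}{(r+0.1)S(r)^2}$ (equivalently, $D_0(r)>0$ together with some $\mu_0(r)$ solves $2+\mu=\frac12\sqrt{2D(r+0.1)}(q_{f,+}-2q_{f,-})$ and $u_b+\mu=-\frac12\sqrt{2D(r+0.1)}(q_{b,+}-2q_{b,-})$). Let $\phi(\chi)=(1+e^{-\frac{\sqrt2}{2}\chi})^{-1}$, $\kappa_f(r)=\frac12-\frac{q_{f,-}(r)}{q_{f,+}(r)}$ and $$\widetilde{M_f}(r)=-q_{f,+}(r)\sqrt{\frac{r+0.1}{D_0(r)}}\int_{-\infty}^{\infty}e^{-\sqrt2\kappa_f(r)\chi}\phi'(\chi)^2d\chi+\int_{-\infty}^{\infty}e^{-\sqrt2\kappa_f(r)\chi}\phi'(\chi)\phi(\chi)d\chi .$$ *)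

(* Defs.v *)
From Stdlib Require Import Reals Lra ClassicalEpsilon.
From Coquelicot Require Import Coquelicot.
Open Scope R_scope.

Definition c01 : R := 1 / 10.

Definition q_of (r u : R) : R := 1 + sqrt ((r + u - 2) / (r + c01)).

Definition ub_spec (r u : R) : Prop :=
  6/5 < u < 4/3 /\ 2 - u + 2 * q_of r u * (1 - u) = 0.

(* u_b(r): the unique u in (6/5,4/3) satisfying ub_spec (chosen by epsilon;
   existence and uniqueness for r > 2/3 are part of the paper's setting) *)
Definition u_b (r : R) : R := epsilon (inhabits 0) (ub_spec r).

Definition q_fp (r : R) : R := 1 + sqrt (r / (r + c01)).
Definition q_fm (r : R) : R := 1 - sqrt (r / (r + c01)).
Definition q_bp (r : R) : R := 1 + sqrt ((r + u_b r - 2) / (r + c01)).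
Definition q_bm (r : R) : R := 1 - sqrt ((r + u_b r - 2) / (r + c01)).

Definition S_fun (r : R) : R := (q_fp r - 2 * q_fm r) + (q_bp r - 2 * q_bm r).

Definition D0 (r : R) : R :=
  2 * (2 - u_b r) ^ 2 / ((r + c01) * (S_fun r) ^ 2).

Definition phi (chi : R) : R := / (1 + exp (- (sqrt 2 / 2) * chi)).

Definition kappa_f (r : R) : R := 1 / 2 - q_fm r / q_fp r.

Definition int_R (f : R -> R) : R :=
  RInt_gen f (Rbar_locally m_infty) (Rbar_locally p_infty).

Definition M_f_tilde (r : R) : R :=
  - q_fp r * sqrt ((r + c01) / D0 r) *
    int_R (fun chi => exp (- sqrt 2 * kappa_f r * chi) * (Derive phi chi) ^ 2)
  + int_R (fun chi => exp (- sqrt 2 * kappa_f r * chi) * Derive phi chi * phi chi).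

(* Main.v *)
Require Import Defs.
From Stdlib Require Import Reals.
From Coquelicot Require Import Coquelicot.
From Stdlib Require Import Lra Psatz ClassicalEpsilon FunctionalExtensionality Ranalysis5.
Open Scope R_scope.


Definition cc : R := sqrt 2 / 2.
Definition EE (x : R) : R := exp (- cc * x).
Definition dphi (x : R) : R := cc * EE x / (1 + EE x) ^ 2.

Lemma EE_pos x : 0 < EE x.
Proof. unfold EE; apply exp_pos. Qed.

Lemma cc_pos : 0 < cc.
Proof. unfold cc. assert (0 < sqrt 2) by (apply sqrt_lt_R0; lra). lra. Qed.

Lemma cc_lt1 : cc < 1.
Proof. unfold cc. assert (H:=sqrt_sqrt 2 (ltac:(lra))). assert (H0:=sqrt_pos 2). nra. Qed.

Lemma phi_eq x : phi x = / (1 + EE x).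
Proof. reflexivity. Qed.

Lemma is_derive_phi x : is_derive phi x (dphi x).
Proof.
  unfold phi, dphi, EE, cc.
  assert (H := exp_pos (- (sqrt 2 / 2) * x)).
  auto_derive. lra.
  field. lra.
Qed.

Lemma Derive_phi : Derive phi = dphi.
Proof. apply functional_extensionality; intro x. apply is_derive_unique, is_derive_phi. Qed.

Lemma dphi_cont x : continuous dphi x.
Proof.
  apply (@ex_derive_continuous R_AbsRing R_NormedModule). unfold dphi, EE.
  assert (H := exp_pos (- cc * x)). auto_derive. nra.
Qed.

Lemma phi_bounds x : 0 < phi x < 1.
Proof. rewrite phi_eq. assert (H := EE_pos x). split.
  apply Rinv_0_lt_compat; lra.
  rewrite <- Rinv_1. apply Rinv_lt_contravar; lra. Qed.

Lemma RInt_dphi a b : RInt dphi a b = phi b - phi a.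
Proof.
  apply is_RInt_unique.
  apply (is_RInt_derive phi dphi). intros; apply is_derive_phi.
  intros; apply dphi_cont.
Qed.

Lemma ub_exists r : 2/3 < r < 4/5 -> exists u, ub_spec r u.
Proof.
  intros Hr.
  assert (Hc01 : c01 = 1/10) by reflexivity.
  set (p := fun b => b^2 * (r + c01) - r - (4 + 2*b)/(3 + 2*b) + 2).
  destruct (IVT_interv p 0 1) as [b0 [Hb1 Hb2]].
  - intros a Ha. apply continuity_pt_filterlim.
    apply (@ex_derive_continuous R_AbsRing R_NormedModule). unfold p.
    auto_derive. lra.
  - lra.
  - unfold p. rewrite Hc01. replace ((4 + 2*0)/(3+2*0)) with (4/3) by field. lra.
  - unfold p. rewrite Hc01. replace ((4 + 2*1)/(3+2*1)) with (6/5) by field. lra.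
  - assert (b0 <> 0). { intros ->. unfold p in Hb2. rewrite Hc01 in Hb2.
      replace ((4 + 2*0)/(3+2*0)) with (4/3) in Hb2 by field. lra. }
    assert (b0 <> 1). { intros ->. unfold p in Hb2. rewrite Hc01 in Hb2.
      replace ((4 + 2*1)/(3+2*1)) with (6/5) in Hb2 by field. lra. }
    exists ((4 + 2*b0)/(3 + 2*b0)).
    set (u := (4 + 2*b0)/(3 + 2*b0)).
    assert (Hu : u * (3 + 2*b0) = 4 + 2*b0) by (unfold u; field; lra).
    assert (Hq : q_of r u = 1 + b0).
    { unfold q_of. f_equal. unfold p in Hb2. fold u in Hb2.
      replace ((r + u - 2) / (r + c01)) with (b0 ^ 2).
      apply sqrt_pow2; lra.
      rewrite Hc01 in *. assert (E : b0^2*(r+1/10) = r+u-2) by lra. rewrite <- E. field. lra. }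
    unfold ub_spec. rewrite Hq. split. split; nra. nra.
Qed.

Definition beta : R := 2/3 + 1/3000.

Lemma ub_facts r : 2/3 < r < beta ->
  let u := u_b r in
  let b := sqrt ((r + u - 2) / (r + c01)) in
  6/5 < u < 4/3 /\ 0 < b /\ b ^ 2 * (r + c01) = r + u - 2 /\
  2 - u + 2 * (1 + b) * (1 - u) = 0.
Proof.
  intros Hr u b.
  assert (Hc01 : c01 = 1/10) by reflexivity.
  unfold beta in Hr.
  assert (Hs : ub_spec r u).
  { unfold u, u_b. apply epsilon_spec. apply ub_exists. lra. }
  destruct Hs as [Hu Hs]. unfold q_of in Hs. fold b in Hs.
  assert (Hb0 : 0 <= b) by apply sqrt_pos.
  assert (0 < b).
  { destruct Hb0 as [|Hb0]; auto. rewrite <- Hb0 in Hs. lra. }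
  assert (0 < (r + u - 2) / (r + c01)).
  { destruct (Rlt_or_le 0 ((r + u - 2) / (r + c01))) as [|Hn]; auto.
    unfold b in H. rewrite sqrt_neg_0 in H; lra. }
  split; auto. split; auto. split; auto.
  unfold b. rewrite <- Rsqr_pow2, Rsqr_sqrt by lra. field. rewrite Hc01; lra.
Qed.

Lemma GL (f : R -> R) :
  (forall x, continuous f x) -> (forall x, 0 <= f x <= dphi x) ->
  exists l, is_RInt_gen f (Rbar_locally m_infty) (Rbar_locally p_infty) l
            /\ RInt f 0 1 <= l.
Proof.
  intros Hc Hb.
  assert (Hex : forall a b, ex_RInt f a b).
  { intros; apply (@ex_RInt_continuous R_CompleteNormedModule); intros; apply Hc. }
  assert (Hexd : forall a b, ex_RInt dphi a b).
  { intros; apply (@ex_RInt_continuous R_CompleteNormedModule); intros; apply dphi_cont. }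
  set (F := fun x => RInt f 0 x).
  assert (HCh : forall a b, RInt f a b = F b - F a).
  { intros a b. unfold F. pose proof (RInt_Chasles f 0 a b (Hex _ _) (Hex _ _)) as E.
    change (plus ?x ?y) with (Rplus x y) in E.
    assert (E' : @RInt R_CompleteNormedModule f 0 a + RInt f a b = RInt f 0 b) by exact E.
    lra. }
  assert (H0 : F 0 = 0). { unfold F. rewrite RInt_point. reflexivity. }
  assert (Hmono : forall x y, x <= y -> F x <= F y).
  { intros x y Hxy. assert (0 <= RInt f x y).
    { apply RInt_ge_0; auto. intros; apply Hb. }
    rewrite HCh in H. lra. }
  assert (Hub : forall x, F x <= 1).
  { intros x. destruct (Rle_dec 0 x).
    - assert (RInt f 0 x <= RInt dphi 0 x).
      { apply RInt_le; auto. intros; apply Hb. }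
      rewrite RInt_dphi in H. pose proof (phi_bounds x). pose proof (phi_bounds 0).
      unfold F; lra.
    - pose proof (Hmono x 0 ltac:(lra)). lra. }
  assert (Hlb : forall x, -1 <= F x).
  { intros x. destruct (Rle_dec x 0).
    - assert (RInt f x 0 <= RInt dphi x 0).
      { apply RInt_le; auto. intros; apply Hb. }
      rewrite RInt_dphi in H. pose proof (phi_bounds x). pose proof (phi_bounds 0).
      rewrite HCh, H0 in H. lra.
    - pose proof (Hmono 0 x ltac:(lra)). lra. }
  destruct (completeness (fun y => exists x, y = F x)) as [lb [Hlb1 Hlb2]].
  { exists 1. intros y [x ->]. apply Hub. }
  { exists (F 0). eauto. }
  destruct (completeness (fun y => exists x, y = - F x)) as [m [Hm1 Hm2]].
  { exists 1. intros y [x ->]. pose proof (Hlb x). lra. }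
  { exists (- F 0). eauto. }
  assert (HF1 : forall x, F x <= lb). { intros x; apply Hlb1; eauto. }
  assert (HF2 : forall x, - m <= F x). { intros x. assert (- F x <= m) by (apply Hm1; eauto). lra. }
  assert (HE1 : forall eps, 0 < eps -> exists x, lb - eps < F x).
  { intros eps He. apply Classical_Prop.NNPP. intros Hn.
    assert (lb <= lb - eps). { apply Hlb2. intros y [x ->].
      destruct (Rle_dec (F x) (lb - eps)); auto. exfalso; apply Hn; exists x; lra. }
    lra. }
  assert (HE2 : forall eps, 0 < eps -> exists x, F x < - m + eps).
  { intros eps He. apply Classical_Prop.NNPP. intros Hn.
    assert (m <= m - eps). { apply Hm2. intros y [x ->].
      destruct (Rle_dec (- F x) (m - eps)); auto. exfalso; apply Hn; exists x; lra. }
    lra. }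
  exists (lb - - m). split.
  - intros P [eps HP]. unfold filtermapi.
      assert (Hep := cond_pos eps).
      destruct (HE1 (eps/2) ltac:(lra)) as [x1 Hx1].
      destruct (HE2 (eps/2) ltac:(lra)) as [x0 Hx0].
      apply Filter_prod with (fun a => a < x0) (fun b => x1 < b).
      exists x0; auto. exists x1; auto.
      intros a b Ha Hb'. exists (RInt f a b). split.
      apply (@RInt_correct R_CompleteNormedModule), Hex.
      apply HP. simpl.
      change (Rabs (RInt f a b - (lb - - m)) < eps).
      rewrite HCh. pose proof (Hmono a x0 ltac:(lra)). pose proof (Hmono x1 b ltac:(lra)).
      pose proof (HF1 b). pose proof (HF2 a).
      apply Rabs_def1; lra.
  - pose proof (HCh 0 1) as HH. rewrite H0 in HH. change (RInt f 0 1 <= lb - - m). rewrite HH. pose proof (HF1 1). pose proof (HF2 0). lra.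
Qed.

Lemma num r : 2/3 < r < beta ->
  0 <= kappa_f r <= 1/2 /\ 0 <= q_fp r * sqrt ((r + c01) / D0 r) * cc <= 1.
Proof.
  intros Hr.
  destruct (ub_facts r Hr) as [Hu [Hb [Hb2 Hs]]].
  set (u := u_b r) in *.
  set (b := sqrt ((r + u - 2) / (r + c01))) in *.
  assert (Hc01 : c01 = 1/10) by reflexivity.
  unfold beta in Hr.
  set (a := sqrt (r / (r + c01))).
  assert (Ha0 : 0 <= a) by apply sqrt_pos.
  assert (Ha2 : a * a * (r + c01) = r).
  { unfold a. rewrite sqrt_sqrt. field. rewrite Hc01; lra.
    apply Rdiv_le_0_compat; rewrite ?Hc01; lra. }
  rewrite Hc01 in Ha2, Hb2.
  assert (Ha1 : 93/100 <= a) by nra.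
  assert (Ha3 : a <= 933/1000) by nra.
  assert (Hb3 : b <= 21/1000) by nra.
  assert (HS : S_fun r = 3*a + 3*b - 2).
  { unfold S_fun, q_fp, q_fm, q_bp, q_bm. fold u. fold a b. ring. }
  split.
  - unfold kappa_f, q_fm, q_fp. fold a.
    set (t := (1 - a) / (1 + a)).
    assert (t * (1 + a) = 1 - a) by (unfold t; field; lra).
    nra.
  - unfold q_fp. fold a.
    set (X := (r + c01) / D0 r).
    assert (HX : X = (r + c01)^2 * (3*a+3*b-2)^2 / (2 * (2 - u)^2)).
    { unfold X, D0. fold u. rewrite HS. field. rewrite Hc01. repeat split. all: nra. }
    assert (HX0 : 0 <= X). { rewrite HX. apply Rdiv_le_0_compat. apply Rmult_le_pos; apply pow2_ge_0. nra. }
    set (s := sqrt X).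
    assert (Hs0 : 0 <= s) by apply sqrt_pos.
    assert (Hs2 : s * s = X) by (apply sqrt_sqrt; auto).
    assert (Hcc : cc * cc = 1/2).
    { unfold cc. assert (H2 := sqrt_sqrt 2 ltac:(lra)). nra. }
    assert (Hcc0 := cc_pos).
    set (Y := (1 + a) * (r + c01) * (3*a+3*b-2)).
    assert (HY : 0 < Y <= 4/3). { unfold Y. rewrite Hc01. split; nra. }
    assert (HA2 : ((1 + a) * s * cc) ^ 2 = Y^2 / (4 * (2 - u)^2)).
    { replace (((1 + a) * s * cc) ^ 2) with ((1+a)^2 * (s*s) * (cc*cc)) by ring.
      rewrite Hs2, Hcc, HX. unfold Y. field. lra. }
    assert (HA3 : ((1 + a) * s * cc) ^ 2 <= 1).
    { rewrite HA2. apply (Rmult_le_reg_r (4 * (2 - u)^2)). nra.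
      unfold Rdiv. rewrite Rmult_assoc, Rinv_l by nra. nra. }
    assert (0 <= (1 + a) * s * cc).
    { apply Rmult_le_pos; [apply Rmult_le_pos|]; lra. }
    split; auto. nra.
Qed.

Lemma exp_le a b : a <= b -> exp a <= exp b.
Proof. intros [H|H]. left; apply exp_increasing; auto. subst; lra. Qed.

Lemma exp_bound k x : 0 <= k <= 1/2 -> exp (- sqrt 2 * k * x) <= 1 + EE x.
Proof.
  intros Hk. assert (Hs : sqrt 2 = 2 * cc) by (unfold cc; field).
  assert (Hc := cc_pos). pose proof (EE_pos x).
  destruct (Rle_dec 0 x).
  - assert (exp (- sqrt 2 * k * x) <= exp 0). { apply exp_le. rewrite Hs. assert (0 <= cc * k * x) by (apply Rmult_le_pos; [apply Rmult_le_pos|]; lra). lra. }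
    rewrite exp_0 in H0. lra.
  - assert (exp (- sqrt 2 * k * x) <= EE x). { unfold EE. apply exp_le. rewrite Hs. assert (0 <= cc * (-x) * (1 - 2*k)) by (apply Rmult_le_pos; [apply Rmult_le_pos|]; lra). lra. }
    lra.
Qed.

Lemma pw (e E A : R) : 0 < E -> 0 < e <= 1 + E -> 0 <= A * cc <= 1 ->
  let p := / (1 + E) in let d := cc * E / (1 + E) ^ 2 in
  (0 <= e * d ^ 2 <= d) /\ (0 <= e * d * p <= d) /\ (0 < e * d * p - A * (e * d ^ 2) <= d).
Proof.
  intros HE He HA p d.
  assert (Hc := cc_pos). assert (Hc1 := cc_lt1).
  assert (Hp : p * (1 + E) = 1) by (unfold p; field; lra).
  assert (Hp0 : 0 < p) by (unfold p; apply Rinv_0_lt_compat; lra).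
  assert (Hd : d = cc * E * p * p) by (unfold d, p; field; lra).
  assert (Hd0 : 0 < d) by (rewrite Hd; apply Rmult_lt_0_compat; [apply Rmult_lt_0_compat; [apply Rmult_lt_0_compat|]|]; lra).
  assert (Hep : e * p <= 1) by (assert (0 <= (1+E-e)*p) by (apply Rmult_le_pos; lra); lra).
  assert (HEp : E * p <= 1) by (assert (0 <= (1)*p) by (apply Rmult_le_pos; lra); lra).
  assert (Hed : e * d <= 1).
  { rewrite Hd. replace (e * (cc * E * p * p)) with (cc * (e * p) * (E * p)) by ring.
    assert (0 <= e * p) by nra. assert (0 <= E * p) by nra.
    assert ((e * p) * (E * p) <= 1) by nra. nra. }
  assert (HAd : A * d <= p).
  { rewrite Hd. replace (A * (cc * E * p * p)) with ((A * cc) * (E * p) * p) by ring.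
    assert (Ep1 : E * p < 1) by nra.
    assert (0 <= E * p) by nra.
    assert ((A * cc) * (E * p) < 1) by nra. nra. }
  assert (HAd' : A * d < p).
  { rewrite Hd. replace (A * (cc * E * p * p)) with ((A * cc) * (E * p) * p) by ring.
    assert (Ep1 : E * p < 1) by nra.
    assert (0 <= E * p) by nra.
    assert ((A * cc) * (E * p) < 1) by nra. nra. }
  split; [|split].
  - split. assert (0 <= d^2) by apply pow2_ge_0. nra. simpl. nra.
  - split. assert (0 <= e * d) by nra. nra. nra.
  - replace (e * d * p - A * (e * d ^ 2)) with (e * d * (p - A * d)) by ring.
    split. apply Rmult_lt_0_compat. nra. lra.
    assert (0 <= e*d) by nra. assert (p - A * d <= p) by (assert (0 <= A * d) by nra; lra). nra.
Qed.

Theorem theorem3 :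
  exists beta : R, 2 / 3 < beta /\
    forall r : R, 2 / 3 < r < beta -> M_f_tilde r > 0.
Proof.
  exists beta. split. unfold beta; lra.
  intros r Hr.
  destruct (num r Hr) as [Hk HA].
  unfold M_f_tilde. rewrite Derive_phi.
  set (k := kappa_f r) in *.
  set (A := q_fp r * sqrt ((r + c01) / D0 r)) in *.
  set (f1 := fun chi => exp (- sqrt 2 * k * chi) * dphi chi ^ 2).
  set (f2 := fun chi => exp (- sqrt 2 * k * chi) * dphi chi * phi chi).
  set (h := fun chi => f2 chi - A * f1 chi).
  assert (HP : forall x, (0 <= f1 x <= dphi x) /\ (0 <= f2 x <= dphi x) /\ (0 < h x <= dphi x)).
  { intros x. unfold h, f1, f2.
    pose proof (exp_bound k x Hk). pose proof (EE_pos x).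
    pose proof (exp_pos (- sqrt 2 * k * x)).
    pose proof (pw (exp (- sqrt 2 * k * x)) (EE x) A ltac:(auto) ltac:(lra) HA) as HH.
    cbv zeta in HH. rewrite phi_eq. unfold dphi. exact HH. }
  assert (Hcont : forall g : R -> R, (forall x, ex_derive g x) -> forall x, continuous g x).
  { intros g Hg x. apply (@ex_derive_continuous R_AbsRing R_NormedModule). apply Hg. }
  assert (Hd1 : forall x, 0 < 1 + EE x) by (intros; pose proof (EE_pos x); lra).
  destruct (GL f1) as [l1 [H1 _]].
  { apply Hcont. intros x. unfold f1, dphi, EE. pose proof (exp_pos (- cc * x)). pose proof (exp_pos (- (sqrt 2 / 2) * x)).
    auto_derive. repeat split; nra. }
  { intros; apply HP. }
  destruct (GL f2) as [l2 [H2 _]].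
  { apply Hcont. intros x. unfold f2, dphi, EE, phi. pose proof (exp_pos (- cc * x)). pose proof (exp_pos (- (sqrt 2 / 2) * x)).
    auto_derive. repeat split; nra. }
  { intros; apply HP. }
  destruct (GL h) as [lh [H3 H4]].
  { apply Hcont. intros x. unfold h, f1, f2, dphi, EE, phi. pose proof (exp_pos (- cc * x)). pose proof (exp_pos (- (sqrt 2 / 2) * x)).
    auto_derive. repeat split; nra. }
  { intros x; destruct (HP x) as [_ [_ Hh]]; lra. }
  assert (H5 : is_RInt_gen h (Rbar_locally m_infty) (Rbar_locally p_infty) (l2 - A * l1)).
  { exact (is_RInt_gen_minus f2 (fun y => scal A (f1 y)) l2 (scal A l1) H2
             (is_RInt_gen_scal f1 A l1 H1)). }
  assert (E1 : int_R f1 = l1) by (apply is_RInt_gen_unique; auto).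
  assert (E2 : int_R f2 = l2) by (apply is_RInt_gen_unique; auto).
  assert (E3 : lh = l2 - A * l1).
  { rewrite <- (is_RInt_gen_unique h lh H3). apply is_RInt_gen_unique; auto. }
  assert (H6 : RInt (fun _ => 0) 0 1 < RInt h 0 1).
  { apply RInt_lt. lra.
    intros y _. apply Hcont. intros x. unfold h, f1, f2, dphi, EE, phi. pose proof (exp_pos (- cc * x)). pose proof (exp_pos (- (sqrt 2 / 2) * x)).
    auto_derive. repeat split; nra.
    intros; apply Hcont; intros; auto_derive; auto.
    intros x _; destruct (HP x) as [_ [_ Hh]]; lra. }
  rewrite RInt_const in H6.
  change (scal (1 - 0) 0) with ((1 - 0) * 0) in H6.
  fold f1 f2. rewrite E1, E2.
  replace (- q_fp r * sqrt ((r + c01) / D0 r)) with (- A) by (unfold A; ring).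
  lra.
Qed.
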